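(* Let $(X,\Pi)$ be a finite strictly quasiconvex quasisupermodular aggregative game. If $x^*$ is a fESS, then $x^*=\max X$ or $x^*=\min X$.
   Context: An aggregative game $(X,\Pi)$ consists of: a totally ordered action set $X$ (finite here) and a totally ordered set $Z$; a symmetric aggregator $a:X\times X\to Z$ ($a(x,y)=a(y,x)$) that is monotone increasing (if $x''\ge x'$, $y''\ge y'$ and $(x'',y'')\neq(x',y')$ then $a(x'',y'')>a(x',y')$); and $\Pi:X\times Z\to\mathbb{R}$, with underlying game payoff $\pi(x,y)=\Pi(x,a(x,y))$. Quasisupermodular: for all $z''>z'$ and $x''>x'$, $\Pi(x'',z')-\Pi(x',z')\ge0\Rightarrow\Pi(x'',z'')-\Pi(x',z'')\ge0$ and $\Pi(x'',z')-\Pi(x',z')>0\Rightarrow\Pi(x'',z'')-\Pi(x',z'')>0$. Strictly quasiconvex: for all $x<x'<x''$ in $X$ and $z\in Z$, $\Pi(x',z)<\max\{\Pi(x,z),\Pi(x'',z)\}$. fESS: $x^*$ with $\Pi(x^*,a(x^*,x))\ge\Pi(x,a(x^*,x))$ for all $x\in X$. *)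

(* Defs.v *)
From HB Require Import structures.
From mathcomp Require Import all_boot all_order all_algebra.
Set Implicit Arguments. Unset Strict Implicit. Unset Printing Implicit Defensive.
Import Order.TTheory GRing.Theory Num.Theory.
Local Open Scope order_scope.

Section AggregativeGame.
Variables (dX dZ : Order.disp_t) (X : finOrderType dX) (Z : orderType dZ)
  (R : realDomainType).

Definition symmetric_aggregator (a : X -> X -> Z) : Prop :=
  forall x y, a x y = a y x.

Definition monotone_increasing_aggregator (a : X -> X -> Z) : Prop :=
  forall x' x'' y' y'', x' <= x'' -> y' <= y'' -> (x'', y'') <> (x', y') ->
    a x' y' < a x'' y''.

Definition quasisupermodular (Pi : X -> Z -> R) : Prop :=
  forall (z' z'' : Z) (x' x'' : X), z' < z'' -> x' < x'' ->
    ((0 <= Pi x'' z' - Pi x' z')%R -> (0 <= Pi x'' z'' - Pi x' z'')%R) /\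
    ((0 < Pi x'' z' - Pi x' z')%R -> (0 < Pi x'' z'' - Pi x' z'')%R).

Definition strictly_quasiconvex (Pi : X -> Z -> R) : Prop :=
  forall (x x' x'' : X) (z : Z), x < x' -> x' < x'' ->
    (Pi x' z < Num.max (Pi x z) (Pi x'' z))%R.

Definition fESS (a : X -> X -> Z) (Pi : X -> Z -> R) (xs : X) : Prop :=
  forall x : X, (Pi x (a xs x) <= Pi xs (a xs x))%R.

End AggregativeGame.

(* Main.v *)
Require Import Defs.
From HB Require Import structures.
From mathcomp Require Import all_boot all_order all_algebra.
Import Order.TTheory GRing.Theory Num.Theory.
Local Open Scope order_scope.

Theorem lemma7 (dX dZ : Order.disp_t) (X : finOrderType dX) (Z : orderType dZ)
  (R : realDomainType) (a : X -> X -> Z) (Pi : X -> Z -> R) (xs : X) :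
  symmetric_aggregator a ->
  monotone_increasing_aggregator a ->
  quasisupermodular Pi ->
  strictly_quasiconvex Pi ->
  fESS a Pi xs ->
  (forall x : X, x <= xs) \/ (forall x : X, xs <= x).
Proof.
move=> _ Hmon Hqs Hqc Hf.
have [/forallP H|/forallPn [h]] := boolP [forall x, x <= xs]; first by left.
rewrite -ltNge => hh.
have [/forallP H|/forallPn [l]] := boolP [forall x, xs <= x]; first by right.
rewrite -ltNge => hl.
exfalso.
have z1 : a xs l < a xs xs.
  apply: Hmon => //; first exact: ltW.
  by case=> E; move: hl; rewrite E ltxx.
have z2 : a xs xs < a xs h.
  apply: Hmon => //; first exact: ltW.
  by case=> E; move: hh; rewrite E ltxx.
have L : (Pi l (a xs xs) <= Pi xs (a xs xs))%R.
  have := (Hqs _ _ _ _ z1 hl).1; rewrite !subr_ge0; apply; exact: Hf.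
have Hh : (Pi h (a xs xs) <= Pi xs (a xs xs))%R.
  rewrite leNgt; apply/negP => C.
  have := (Hqs _ _ _ _ z2 hh).2; rewrite !subr_gt0 => /(_ C).
  by rewrite ltNge Hf.
have := Hqc _ _ _ (a xs xs) hl hh.
by rewrite lt_max !ltNge L Hh.
Qed.
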